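(* Let $d\ge k\ge2$, $n\ge1$, $\Delta>0$, and let $\sigma:\mathbb{R}\to\mathbb{R}$ be a measurable function applied entrywise. Let the readout be dense with equal entries, $\mathbf v=k^{-1/2}(1,\dots,1)\in\mathbb{R}^k$. Let $\mathbf W^0\in\mathbb{R}^{k\times d}$ be drawn uniformly from the Stiefel manifold of $k\times d$ matrices with orthonormal rows, with rows $\mathbf w^0_1,\dots,\mathbf w^0_k$. Let $\mathbf x_\mu\sim\mathcal N(0,\mathbf I_d)$ and $z_\mu\sim\mathcal N(0,1)$, $\mu\in[n]$, be i.i.d. and independent of $\mathbf W^0$, and let the data be $\mathcal D=(\mathbf x_\mu,y^{\rm out}_\mu)_{\mu\in[n]}$ with $y^{\rm out}_\mu=\mathbf v^\top\sigma(\mathbf W^0\mathbf x_\mu)+\sqrt\Delta\,z_\mu$. Let $\mathbf W^1$ (with rows $\mathbf w^1_j$) be a sample from the posterior $P(\mathbf W\mid\mathcal D)\propto\nu(\mathbf W)\prod_{\mu\le n}\exp\!\big(-\tfrac{1}{2\Delta}(y^{\rm out}_\mu-\mathbf v^\top\sigma(\mathbf W\mathbf x_\mu))^2\big)$, where $\nu$ is the uniform measure on the Stiefel manifold, and let $\mathbb{E}\langle\cdot\rangle$ denote expectation over $\mathcal D,\mathbf W^0$ and the posterior sample. Then there is an absolute constant $C>0$ such that for all $i\neq j$ in $[k]$, $\mathbb{E}\langle(\mathbf w^0_i\cdot\mathbf w^1_j)^2\rangle\le C/k$; in particular this is $O(d^{-1})$ when $k=\Theta(d)$.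
   Context: $\langle\cdot\rangle$ denotes expectation with respect to the posterior distribution $P(\mathbf W\mid\mathcal D)$ given above; $\mathbb{E}$ denotes expectation over the data and the teacher weights $\mathbf W^0$. *)

(* Defs.v *)
From HB Require Import structures.
From mathcomp Require Import all_boot all_order all_algebra.
From mathcomp Require Import all_classical all_reals all_analysis.
Set Implicit Arguments. Unset Strict Implicit. Unset Printing Implicit Defensive.
Import Order.TTheory GRing.Theory Num.Theory.
Local Open Scope classical_set_scope.
Local Open Scope ring_scope.

(* Borel sigma-algebra of R^(k*d): generated by the k*d coordinate maps. *)
Definition mxR (R : realType) (k d : nat) := 'M[R]_(k, d).
HB.instance Definition _ (R : realType) k d := Choice.on (mxR R k d).
HB.instance Definition _ (R : realType) k d :=
  isPointed.Build (mxR R k d) (0 : 'M[R]_(k, d)).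

Definition mx_coord (R : realType) k d (i : 'I_(k * d)) (A : mxR R k d) : R :=
  mxvec (A : 'M[R]_(k, d)) 0 i.

Fact mx_display : measure_display. Proof. exact. Qed.

Section mx_measurable.
Context (R : realType) (k d : nat).
Let G := g_sigma_preimage (@mx_coord R k d).
Let G0 : G set0. Proof. exact: sigma_algebra0. Qed.
Let GC A : G A -> G (~` A). Proof. exact: sigma_algebraC. Qed.
Let GU (F : (set (mxR R k d))^nat) : (forall i, G (F i)) -> G (\bigcup_i F i).
Proof. exact: sigma_algebra_bigcup. Qed.
HB.instance Definition _ := @isMeasurable.Build mx_display (mxR R k d) G G0 GC GU.
End mx_measurable.

Definition stiefel (R : realType) (k d : nat) : set (mxR R k d) :=
  [set W | (W : 'M[R]_(k, d)) *m W^T = 1%:M].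

Definition orthogonal_mx (R : realType) (m : nat) (O : 'M[R]_m) : Prop :=
  O *m O^T = 1%:M.

(* nu is the uniform (Haar) probability measure on the Stiefel manifold:
   a probability measure concentrated on V_k(R^d), invariant under the
   natural action of O(d) (right multiplication) and of O(k) (left
   multiplication). These properties characterise it uniquely. *)
Definition uniform_stiefel (R : realType) (k d : nat)
  (nu : probability (mxR R k d) R) : Prop :=
  [/\ measurable (@stiefel R k d),
      nu (@stiefel R k d) = 1%E,
      (forall O : 'M[R]_d, orthogonal_mx O -> forall A, measurable A ->
         nu ((fun W : mxR R k d => (W : 'M[R]_(k, d)) *m O : mxR R k d) @^-1` A)
         = nu A) &
      (forall Q : 'M[R]_k, orthogonal_mx Q -> forall A, measurable A ->
         nu ((fun W : mxR R k d => Q *m (W : 'M[R]_(k, d)) : mxR R k d) @^-1` A)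
         = nu A)].

(* gauss_iter m f = E[f(g)] for g_0,...,g_{m-1} i.i.d. N(0,1), as iterated
   integrals (Tonelli); coordinates >= m are set to 0. *)
Fixpoint gauss_iter (R : realType) (m : nat) (f : (nat -> R) -> \bar R) : \bar R :=
  match m with
  | 0 => f (fun _ => 0)
  | m'.+1 => (\int[normal_prob (0:R) 1]_x
               gauss_iter m' (fun g => f (fun i => if i == m' then x else g i)))%E
  end.

(* E[f(G)] for G a p x q matrix with i.i.d. N(0,1) entries. *)
Definition gauss_mx (R : realType) (p q : nat) (f : 'M[R]_(p, q) -> \bar R) : \bar R :=
  gauss_iter (p * q) (fun g => f (\matrix_(i < p, j < q) g (i * q + j)%N)).

Definition readout (R : realType) (k : nat) : 'cV[R]_k :=
  const_mx (Num.sqrt (k%:R))^-1.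

Definition net_out (R : realType) (k d : nat) (sigma : R -> R)
  (W : 'M[R]_(k, d)) (x : 'cV[R]_d) : R :=
  ((readout R k)^T *m map_mx sigma (W *m x)) 0 0.

(* data: X has rows x_mu^T, Z has entries z_mu *)
Definition y_out (R : realType) (k d n : nat) (sigma : R -> R) (Delta : R)
  (W0 : 'M[R]_(k, d)) (X : 'M[R]_(n, d)) (Z : 'rV[R]_n) (mu : 'I_n) : R :=
  net_out sigma W0 (row mu X)^T + Num.sqrt Delta * Z 0 mu.

Definition likelihood (R : realType) (k d n : nat) (sigma : R -> R) (Delta : R)
  (W0 : 'M[R]_(k, d)) (X : 'M[R]_(n, d)) (Z : 'rV[R]_n) (W : mxR R k d) : R :=
  \prod_(mu < n)
    expR (- (y_out sigma Delta W0 X Z mu - net_out sigma W (row mu X)^T) ^+ 2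
          / (2 * Delta)).

Definition post_avg (R : realType) (k d n : nat) (nu : probability (mxR R k d) R)
  (sigma : R -> R) (Delta : R) (W0 : 'M[R]_(k, d)) (X : 'M[R]_(n, d))
  (Z : 'rV[R]_n) (f : mxR R k d -> R) : R :=
  Rintegral nu setT (fun W => likelihood sigma Delta W0 X Z W * f W)
  / Rintegral nu setT (likelihood sigma Delta W0 X Z).

Definition row_dot (R : realType) (k d : nat) (A B : 'M[R]_(k, d)) (i j : 'I_k) : R :=
  (row i A *m (row j B)^T) 0 0.

Definition bayes_overlap2 (R : realType) (k d n : nat)
  (nu : probability (mxR R k d) R) (sigma : R -> R) (Delta : R) (i j : 'I_k) : \bar R :=
  (\int[nu]_W0
     gauss_mx (fun X : 'M[R]_(n, d) =>
       gauss_mx (fun Z : 'M[R]_(1, n) =>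
         (post_avg nu sigma Delta W0 X Z
            (fun W1 => (row_dot W0 W1 i j) ^+ 2))%:E)))%E.

(* Main.v *)
Require Import Defs.
From HB Require Import structures.
From mathcomp Require Import all_boot all_order all_algebra.
From mathcomp Require Import all_classical all_reals all_analysis.
From mathcomp Require Import fingroup perm.
Import Order.TTheory GRing.Theory Num.Theory.
Local Open Scope ring_scope.
Local Open Scope classical_set_scope.
Import measurable_realfun.

Section M.
Variable R : realType.

Lemma bigsetU_ord_sup T n (F : 'I_n -> set T) i : F i `<=` \big[setU/set0]_(j < n) F j.
Proof. by rewrite (bigD1 i) //= => x Fx; left. Qed.

Lemma bigsetU_ord_ex T n (F : 'I_n -> set T) x :
  (\big[setU/set0]_(j < n) F j) x -> exists i, F i x.
Proof.
elim/big_rec: _ => [//|i A _ IH] [Fi|Ax]; first by exists i.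
exact: IH.
Qed.

Lemma mx_coord_meas k d (i : 'I_(k*d)) : measurable_fun setT (@mx_coord R k d i).
Proof.
move=> _ B mB; rewrite setTI.
apply: sub_sigma_algebra.
apply: (@bigsetU_ord_sup _ _ (fun j => preimage_set_system setT
   (@mx_coord R k d j) measurable) i).
by exists B => //; rewrite setTI.
Qed.

Lemma entry_meas k d (a : 'I_k) (b : 'I_d) :
  measurable_fun setT (fun W : mxR R k d => (W : 'M[R]_(k,d)) a b).
Proof.
have -> : (fun W : mxR R k d => (W : 'M[R]_(k,d)) a b) = @mx_coord R k d (mxvec_index a b).
  by apply/funext => W; rewrite /mx_coord mxvecE.
exact: mx_coord_meas.
Qed.

Lemma mx_map_meas k d (f : mxR R k d -> mxR R k d) :
  (forall a b, measurable_fun setT (fun W => (f W : 'M[R]_(k,d)) a b)) ->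
  measurable_fun setT f.
Proof.
move=> hf.
apply: (measurability (\big[setU/set0]_(i < k * d)
   preimage_set_system setT (@mx_coord R k d i) measurable)) => //.
move=> _ [S HS <-].
have [i [B mB <-]] := @bigsetU_ord_ex _ _ _ _ HS.
move: mB; case/mxvec_indexP: i => a b mB.
have := hf a b measurableT B mB.
congr (measurable _); apply/funext => W /=.
rewrite /mx_coord mxvecE; apply/propext; tauto.
Qed.

Lemma mfun_sum d0 (T : measurableType d0) I (r : seq I) (P : pred I) (F : I -> T -> R) :
  (forall i, measurable_fun setT (F i)) ->
  measurable_fun setT (fun x => \sum_(i <- r | P i) F i x).
Proof.
move=> hF; elim: r => [|a r IH].
  by under eq_fun do rewrite big_nil; exact: measurable_cst.
under eq_fun do rewrite big_cons.
case: (P a) => //; exact: measurable_funD.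
Qed.

Lemma mfun_prod d0 (T : measurableType d0) I (r : seq I) (P : pred I) (F : I -> T -> R) :
  (forall i, measurable_fun setT (F i)) ->
  measurable_fun setT (fun x => \prod_(i <- r | P i) F i x).
Proof.
move=> hF; elim: r => [|a r IH].
  by under eq_fun do rewrite big_nil; exact: measurable_cst.
under eq_fun do rewrite big_cons.
case: (P a) => //; exact: measurable_funM.
Qed.

Lemma row_dotE k d (A B : 'M[R]_(k, d)) i j :
  row_dot A B i j = \sum_l A i l * B j l.
Proof. by rewrite /row_dot mxE; apply: eq_bigr => l _; rewrite !mxE. Qed.

Lemma net_outE k d sigma (W : 'M[R]_(k, d)) x :
  net_out sigma W x = \sum_a (Num.sqrt (k%:R))^-1 * sigma (\sum_b W a b * x b 0).
Proof.
rewrite /net_out mxE; apply: eq_bigr => a _; rewrite !mxE; congr (_ * sigma _).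
Qed.

Lemma net_out_meas k d sigma x : measurable_fun setT sigma ->
  measurable_fun setT (fun W : mxR R k d => net_out sigma (W : 'M[R]_(k,d)) x).
Proof.
move=> ms; under eq_fun do rewrite net_outE.
apply: mfun_sum => a; apply: measurable_funM; first exact: measurable_cst.
apply: (measurableT_comp ms); apply: mfun_sum => b.
apply: measurable_funM; [exact: entry_meas | exact: measurable_cst].
Qed.

Lemma likelihood_meas k d n sigma Delta W0 X Z : measurable_fun setT sigma ->
  measurable_fun setT (@likelihood R k d n sigma Delta W0 X Z).
Proof.
move=> ms; rewrite /likelihood; apply: mfun_prod => mu.
apply: (measurableT_comp (@measurable_expR R)).
apply: measurable_funM; last exact: measurable_cst.
apply: measurableT_comp; first exact: measurable_funN.
apply: measurable_funX; apply: measurable_funB; first exact: measurable_cst.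
exact: net_out_meas.
Qed.

Lemma integrand_meas k d n sigma Delta W0 X Z i j : measurable_fun setT sigma ->
  measurable_fun setT (fun W : mxR R k d => @likelihood R k d n sigma Delta W0 X Z W *
     (row_dot W0 W i j) ^+ 2).
Proof.
move=> ms; apply: measurable_funM; first exact: likelihood_meas.
apply: measurable_funX; under eq_fun do rewrite row_dotE.
apply: mfun_sum => l; apply: measurable_funM; [exact: measurable_cst|exact: entry_meas].
Qed.

Lemma net_out_perm k d sigma (s : 'S_k) (W : 'M[R]_(k, d)) x :
  net_out sigma (row_perm s W) x = net_out sigma W x.
Proof.
rewrite !net_outE [RHS](reindex_inj (@perm_inj _ s)) /=.
by apply: eq_bigr => a _; congr (_ * sigma _); apply: eq_bigr => b _; rewrite mxE.
Qed.

Lemma likelihood_perm k d n sigma Delta W0 X Z (s : 'S_k) (W : 'M[R]_(k, d)) :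
  @likelihood R k d n sigma Delta W0 X Z (row_perm s W) =
  @likelihood R k d n sigma Delta W0 X Z W.
Proof. by rewrite /likelihood; apply: eq_bigr => mu _; rewrite net_out_perm. Qed.

Lemma row_dot_perm k d (s : 'S_k) (W0 W : 'M[R]_(k, d)) i j :
  row_dot W0 (row_perm s W) i j = row_dot W0 W i (s j).
Proof. by rewrite !row_dotE; apply: eq_bigr => l _; rewrite mxE. Qed.

Lemma perm_orth k (s : 'S_k) : orthogonal_mx (perm_mx s : 'M[R]_k).
Proof. by rewrite /orthogonal_mx tr_perm_mx -perm_mxM mulgV perm_mx1. Qed.

Lemma perm_map_meas k d (s : 'S_k) :
  measurable_fun setT (fun W : mxR R k d => (perm_mx s *m (W : 'M[R]_(k,d)) : mxR R k d)).
Proof.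
apply: mx_map_meas => a b.
under eq_fun do rewrite -row_permE mxE.
exact: entry_meas.
Qed.

Lemma int_perm_inv k d (nu : probability (mxR R k d) R) (s : 'S_k)
  (g : mxR R k d -> \bar R) :
  uniform_stiefel nu -> measurable_fun setT g -> (forall x, (0 <= g x)%E) ->
  (\int[nu]_(x in setT) g x = \int[nu]_(x in setT) g (row_perm s x : mxR R k d))%E.
Proof.
case=> _ _ _ inv mg g0.
rewrite (eq_measure_integral (pushforward nu
  (fun W : mxR R k d => (perm_mx s *m (W : 'M[R]_(k,d)) : mxR R k d)))); last first.
  move=> mphi A mA _; rewrite /pushforward.
  exact: (esym (inv (perm_mx s) (perm_orth _ s) A mA)).
move=> mphi.
rewrite (ge0_integral_pushforward (perm_map_meas k d s)) //.
  by congr (integral _ _ _); apply/funext => x /=; rewrite row_permE.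
apply: mx_map_meas => a b; under eq_fun do rewrite -row_permE mxE; exact: entry_meas.
Qed.

Definition sqn {n} (v : 'rV[R]_n) := (v *m v^T) 0 0.

Lemma sqnE n (v : 'rV[R]_n) : sqn v = \sum_l (v 0 l) ^+ 2.
Proof. by rewrite /sqn mxE; apply: eq_bigr => l _; rewrite mxE expr2. Qed.

Lemma sqn_ge0 n (v : 'rV[R]_n) : 0 <= sqn v.
Proof. by rewrite sqnE; apply: sumr_ge0 => l _; exact: sqr_ge0. Qed.

Lemma bessel k d (W0 W : 'M[R]_(k,d)) i : W *m W^T = 1%:M ->
  \sum_j (row_dot W0 W i j) ^+ 2 <= \sum_l (W0 i l) ^+ 2.
Proof.
move=> HW.
set u := row i W0.
have E1 : \sum_l (W0 i l) ^+ 2 = sqn u by rewrite sqnE; apply: eq_bigr => l _; rewrite mxE.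
have E2 : \sum_j (row_dot W0 W i j) ^+ 2 = sqn (u *m W^T).
  rewrite sqnE; apply: eq_bigr => j _; rewrite row_dotE mxE; congr (_ ^+ 2).
  by apply: eq_bigr => l _; rewrite !mxE.
rewrite E1 E2.
set P := W^T *m W.
have HP : P *m P = P by rewrite /P mulmxA -(mulmxA W^T) HW mulmx1.
have HPt : P^T = P by rewrite /P trmx_mul trmxK.
have E3 : sqn (u *m W^T) = (u *m P *m u^T) 0 0.
  by rewrite /sqn trmx_mul trmxK /P !mulmxA.
have E4 : sqn (u - u *m P) = sqn u - (u *m P *m u^T) 0 0.
  rewrite /sqn linearB /= trmx_mul HPt mulmxBl !mulmxBr.
  rewrite !mulmxA -(mulmxA (u *m W^T) W W^T) HW mulmx1 subrr subr0.
  by rewrite [LHS]mxE [X in _ + X]mxE.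
rewrite E3 -subr_ge0 -E4; exact: sqn_ge0.
Qed.

Lemma le_int_nm d0 (T : measurableType d0) (mu : {measure set T -> \bar R})
  (f g : T -> \bar R) : (forall x, (0 <= f x)%E) -> (forall x, (f x <= g x)%E) ->
  (\int[mu]_(x in setT) f x <= \int[mu]_(x in setT) g x)%E.
Proof.
move=> f0 fg.
have g0 : forall x, (0 <= g x)%E by move=> x; exact: le_trans (f0 x) (fg x).
rewrite !ge0_integralTE//.
apply: le_ereal_sup => _ [h hf <-]; exists h => //= x; exact: le_trans (hf x) (fg x).
Qed.

Lemma gauss_iter_bound m (f : (nat -> R) -> \bar R) (c : R) :
  (forall g, (0 <= f g <= c%:E)%E) -> (0 <= gauss_iter m f <= c%:E)%E.
Proof.
elim: m f => [|m IH] f hf /=; first exact: hf.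
set h := fun x => _.
have hh : forall x, (0 <= h x <= c%:E)%E by move=> x; apply: IH => g; exact: hf.
apply/andP; split.
  by apply: integral_ge0 => x _; have /andP[] := hh x.
apply: (le_trans (@le_int_nm _ _ _ _ (cst c%:E) _ _)).
- by move=> x; have /andP[] := hh x.
- by move=> x; have /andP[] := hh x.
rewrite integral_cst // [X in (_ * X)%E](_ : _ = 1%E) ?mule1 //; exact: (probability_setT (normal_prob (0:R) 1)).
Qed.

Lemma gauss_mx_bound p q (f : 'M[R]_(p, q) -> \bar R) (c : R) :
  (forall g, (0 <= f g <= c%:E)%E) -> (0 <= gauss_mx f <= c%:E)%E.
Proof. by move=> hf; apply: gauss_iter_bound => g; exact: hf. Qed.

Lemma ae_stiefel k d (nu : probability (mxR R k d) R) (P : mxR R k d -> Prop) :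
  uniform_stiefel nu -> (forall W, stiefel W -> P W) -> {ae nu, forall x, P x}.
Proof.
case=> ms ns _ _ H; exists (~` @stiefel R k d); split.
- exact: measurableC.
- by rewrite probability_setC // ns subee.
- by move=> x /= nPx Sx; apply: nPx; exact: H.
Qed.

Lemma post_bound k d n (nu : probability (mxR R k d) R) sigma Delta
  (W0 : 'M[R]_(k,d)) (X : 'M[R]_(n,d)) (Z : 'rV[R]_n) (i j : 'I_k) :
  0 < Delta -> measurable_fun setT sigma -> uniform_stiefel nu ->
  0 <= post_avg nu sigma Delta W0 X Z (fun W1 => (row_dot W0 W1 i j) ^+ 2)
    <= (\sum_l (W0 i l) ^+ 2) / k%:R.
Proof.
move=> D0 ms hnu.
pose L := @likelihood R k d n sigma Delta W0 X Z.
pose c := \sum_l (W0 i l) ^+ 2.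
have c0 : 0 <= c by apply: sumr_ge0 => l _; exact: sqr_ge0.
have L01 : forall W, 0 <= L W <= 1.
  move=> W; apply/andP; split.
    by apply: prodr_ge0 => mu _; exact: expR_ge0.
  apply: prodr_ile1 => mu _; rewrite expR_ge0 /= expR_le1.
  rewrite mulNr oppr_le0; apply: divr_ge0; first exact: sqr_ge0.
  by rewrite mulr_ge0 // ltW.
pose g (j' : 'I_k) (W : mxR R k d) := L W * (row_dot W0 W i j') ^+ 2.
have mg : forall j', measurable_fun setT (g j') by move=> j'; exact: integrand_meas.
have g0 : forall j' W, 0 <= g j' W.
  by move=> j' W; apply: mulr_ge0; [have /andP[] := L01 W | exact: sqr_ge0].
pose E j' := (\int[nu]_(x in setT) (g j' x)%:E)%E.
have HE : forall j', E j' = E j.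
  move=> j'; rewrite /E (@int_perm_inv k d nu (tperm j' j) _ hnu); last 2 first.
  - by apply/measurable_EFinP; exact: mg.
  - by move=> x; rewrite lee_fin.
  apply: eq_integral => x _; rewrite /g /L likelihood_perm row_dot_perm tpermL.
  by [].
have mS : measurable_fun setT (fun x => \sum_(j' < k) g j' x) by apply: mfun_sum.
have HS : ((E j *+ k)%R = \int[nu]_(x in setT) (\sum_(j' < k) g j' x)%:E)%E.
  have -> : ((E j *+ k)%R = \sum_(j' < k) E j)%E by rewrite sumr_const card_ord.
  under eq_bigr => j' _ do rewrite -(HE j').
  rewrite /E -ge0_integral_sum //.
  - by apply: eq_integral => x _; rewrite sumEFin.
  - by move=> j'; apply/measurable_EFinP; exact: mg.
  - by move=> j' x _; rewrite lee_fin.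
pose IL := (\int[nu]_(x in setT) (L x)%:E)%E.
have mL : measurable_fun setT L by exact: likelihood_meas.
have HB : ((E j *+ k)%R <= c%:E * IL)%E.
  rewrite HS /IL -ge0_integralZl_EFin //; last first.
  - by apply/measurable_EFinP.
  - by move=> x _; rewrite lee_fin; have /andP[] := L01 x.
  apply: ae_ge0_le_integral => //.
  - by move=> x _; rewrite lee_fin; apply: sumr_ge0 => j' _.
  - by apply/measurable_EFinP.
  - by move=> x _; rewrite -EFinM lee_fin; apply: mulr_ge0 => //; have /andP[] := L01 x.
  - apply/measurable_EFinP => /=; apply: measurable_funM => //; exact: measurable_cst.
  apply: ae_stiefel => // W HW _; rewrite -EFinM lee_fin.
  rewrite /g -mulr_sumr mulrC; apply: ler_wpM2r; first by have /andP[] := L01 W.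
  exact: bessel.
have IL0 : (0 <= IL)%E by apply: integral_ge0 => x _; rewrite lee_fin; have /andP[] := L01 x.
have IL1 : (IL <= 1)%E.
  apply: (le_trans (@le_int_nm _ _ _ _ (cst 1%E) _ _)).
  - by move=> x; rewrite lee_fin; have /andP[] := L01 x.
  - by move=> x; rewrite lee_fin; have /andP[] := L01 x.
  by rewrite integral_cst // [X in (_ * X)%E](_ : _ = 1%E) ?mule1 //; exact: probability_setT.
have E0 : (0 <= E j)%E by apply: integral_ge0 => x _; rewrite lee_fin.
have kpos : (0 < k)%N by apply: leq_ltn_trans (ltn_ord j).
have Ek : (E j <= (E j *+ k)%R)%E.
  have gen : forall (x : \bar R) m, (0 <= x)%E -> (0 < m)%N -> (x <= (x *+ m)%R)%E.
    move=> x [//|m] x0 _; rewrite mulrS; apply: leeDl.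
    by elim: m => [|m IH]; rewrite ?mulr0n // mulrS adde_ge0.
  exact: gen.
have ILr : IL = (fine IL)%:E.
  by rewrite fineK // ge0_fin_numE // (le_lt_trans IL1) // ltry.
have Ee : E j = (fine (E j))%:E.
  rewrite fineK // ge0_fin_numE // (le_lt_trans Ek) // (le_lt_trans HB) //.
  by rewrite ILr -EFinM ltry.
set r := fine IL in ILr; set e := fine (E j) in Ee.
have r0 : 0 <= r by rewrite -lee_fin -ILr.
have e0 : 0 <= e by rewrite -lee_fin -Ee.
have Hek : e *+ k <= c * r by rewrite -lee_fin EFinM -ILr EFin_natmul -Ee.
have -> : post_avg nu sigma Delta W0 X Z (fun W1 => row_dot W0 W1 i j ^+ 2) = e / r by [].
apply/andP; split; first exact: divr_ge0.
have [->|rne0] := eqVneq r 0; first by rewrite invr0 mulr0 divr_ge0.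
have rpos : 0 < r by rewrite lt_def rne0.
have kpos' : 0 < (k%:R : R) by rewrite ltr0n.
rewrite ler_pdivrMr // mulrAC ler_pdivlMr // mulr_natr.
exact: Hek.
Qed.
End M.

Theorem mainTheorem2 (R : realType) :
  exists C : R, 0 < C /\
  forall (k d n : nat) (Delta : R) (sigma : R -> R)
         (nu : probability (mxR R k d) R),
    (2 <= k)%N -> (k <= d)%N -> (1 <= n)%N -> 0 < Delta ->
    measurable_fun setT sigma ->
    uniform_stiefel nu ->
    forall i j : 'I_k, i != j ->
      (bayes_overlap2 n nu sigma Delta i j <= (C / k%:R)%:E)%E.
Proof.
exists 1; split => // k d n Delta sigma nu hk hkd hn D0 ms hnu i j ij.
have hG : forall W0 : mxR R k d,
   (0 <= gauss_mx (fun X : 'M[R]_(n, d) =>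
       gauss_mx (fun Z : 'M[R]_(1, n) =>
         (post_avg nu sigma Delta W0 X Z
            (fun W1 => (row_dot W0 W1 i j) ^+ 2))%:E))
    <= ((\sum_l ((W0 : 'M[R]_(k,d)) i l) ^+ 2) / k%:R)%:E)%E.
  move=> W0; apply: gauss_mx_bound => X; apply: gauss_mx_bound => Z.
  by rewrite !lee_fin; apply: post_bound.
rewrite /bayes_overlap2.
apply: (le_trans (@le_int_nm _ _ _ _ _
   (fun W0 : mxR R k d => ((\sum_l ((W0 : 'M[R]_(k,d)) i l) ^+ 2) / k%:R)%:E) _ _)).
- by move=> W0; have /andP[] := hG W0.
- by move=> W0; have /andP[] := hG W0.
apply: (le_trans (@ae_ge0_le_integral _ _ _ nu setT measurableT _ (cst (1 / k%:R)%:E) _ _ _ _ _)).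
- by move=> W0 _; rewrite lee_fin; apply: divr_ge0 => //; apply: sumr_ge0 => l _; exact: sqr_ge0.
- apply/measurable_EFinP; apply: measurable_funM; last exact: measurable_cst.
  apply: mfun_sum => l; apply: measurable_funX; exact: entry_meas.
- by move=> x _; rewrite lee_fin divr_ge0.
- exact: measurable_cst.
- apply: ae_stiefel => // W HW _ /=; rewrite lee_fin mul1r.
  suff -> : \sum_(l < d) (W : 'M[R]_(k,d)) i l ^+ 2 = 1 by rewrite mul1r.
  have := congr1 (fun M : 'M[R]_k => M i i) HW; rewrite !mxE eqxx /= => H.
  apply: etrans H; apply: eq_bigr => l _; by rewrite mxE expr2.
by rewrite integral_cst // [X in (_ * X)%E](_ : _ = 1%E) ?mule1 //; exact: probability_setT.
Qed.
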